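(* Let $\mu\in\mathcal{F}(\mathbb{X})$, let $X_1,X_2,\dots$ be i.i.d. with law $\mu$, and let $\hat\mu_n$ be the empirical measure. Then almost surely $\hat\mu_n\ll\mu$ and $H(\hat\mu_n)<\infty$, $D(\hat\mu_n\|\mu)<\infty$, and for every $n\ge1$ and every $\epsilon>0$: $$\mathbb{P}^n_\mu\big(D(\hat\mu_n\|\mu)>\epsilon\big)\le 2^{|A_\mu|+1}\exp\Big(-\frac{2\mathbf{m}_\mu^2\,n\epsilon^2}{(\log e)^2}\Big),$$ $$\mathbb{P}^n_\mu\big(|H(\hat\mu_n)-H(\mu)|>\epsilon\big)\le 2^{|A_\mu|+1}\exp\Big(-\frac{2n\epsilon^2}{(\mathbf{M}_\mu+\log e/\mathbf{m}_\mu)^2}\Big),$$ $$\mathbb{P}^n_\mu\big(D(\mu\|\hat\mu_n)>\epsilon\big)\le 2^{|A_\mu|+1}\Big[\exp\Big(-\frac{2n\epsilon^2}{(\log e)^2(1/\mathbf{m}_\mu+1)^2}\Big)+\exp(-n\mathbf{m}_\mu^2)\Big].$$ Moreover, almost surely $D(\mu\|\hat\mu_n)<\infty$ for all sufficiently large $n$.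
   Context: $\mathbb{X}$ is a countably infinite set and $\mathcal{P}(\mathbb{X})$ the set of probability measures on all subsets of $\mathbb{X}$. For $\mu\in\mathcal{P}(\mathbb{X})$, $f_\mu(x)=\mu(\{x\})$ is its pmf and $A_\mu=\{x:f_\mu(x)>0\}$ its support; $\mathcal{F}(\mathbb{X})$ is the set of $\mu$ with $|A_\mu|<\infty$. For $\mu\in\mathcal{F}(\mathbb{X})$, $\mathbf{m}_\mu=\min_{x\in A_\mu}f_\mu(x)$ and $\mathbf{M}_\mu=\log(1/\mathbf{m}_\mu)$. $\log$ is the logarithm to a fixed base $b>1$ (so $\log e=1/\ln b$). Entropy: $H(\mu)=-\sum_{x\in A_\mu}f_\mu(x)\log f_\mu(x)$. I-divergence: $D(\mu\|\nu)=\sum_{x\in A_\mu}f_\mu(x)\log\frac{f_\mu(x)}{f_\nu(x)}$ if $\mu\ll\nu$, and $+\infty$ otherwise. Given i.i.d. $X_1,X_2,\dots\sim\mu$, $\mathbb{P}_\mu$ is the law of the whole sequence and $\mathbb{P}^n_\mu$ that of $(X_1,\dots,X_n)$; the empirical measure is $\hat\mu_n(A)=\frac1n\sum_{k=1}^n\mathbb{1}_A(X_k)$ for $A\subset\mathbb{X}$. *)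

(* Defs.v *)
From Stdlib Require Import Reals Lra List Arith ClassicalEpsilon.
Open Scope R_scope.

Definition logb (b x : R) : R := ln x / ln b.

(* a pmf is a function nat -> R; the measure is recovered by summation *)
Definition is_pmf (f : nat -> R) : Prop :=
  (forall x, 0 <= f x) /\ infinite_sum f 1.

Definition abs_cont (nu mu : nat -> R) : Prop :=
  forall x, mu x = 0 -> nu x = 0.

Definition ent_term (b : R) (g : nat -> R) (x : nat) : R :=
  if Rlt_dec 0 (g x) then - (g x * logb b (g x)) else 0.

Definition H_is (b : R) (g : nat -> R) (h : R) : Prop :=
  infinite_sum (ent_term b g) h.
Definition H_finite (b : R) (g : nat -> R) : Prop := exists h, H_is b g h.

Definition div_term (b : R) (nu mu : nat -> R) (x : nat) : R :=
  if Rlt_dec 0 (nu x) then nu x * logb b (nu x / mu x) else 0.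

Definition D_is (b : R) (nu mu : nat -> R) (d : R) : Prop :=
  abs_cont nu mu /\ infinite_sum (div_term b nu mu) d.
Definition D_finite (b : R) (nu mu : nat -> R) : Prop :=
  exists d, D_is b nu mu d.

(* extended-real event D(nu||mu) > eps  (D = +oo when not finite) *)
Definition D_gt (b : R) (nu mu : nat -> R) (eps : R) : Prop :=
  ~ D_finite b nu mu \/ forall d, D_is b nu mu d -> eps < d.

(* extended-real event |H(nu) - H(mu)| > eps *)
Definition H_dev_gt (b : R) (nu mu : nat -> R) (eps : R) : Prop :=
  forall h1 h2, H_is b nu h1 -> H_is b mu h2 -> eps < Rabs (h1 - h2).

Definition emp (xs : list nat) (x : nat) : R :=
  INR (count_occ Nat.eq_dec xs x) / INR (length xs).

Fixpoint tuples (n K : nat) : list (list nat) :=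
  match n with
  | O => nil :: nil
  | S n' => flat_map (fun l => map (fun a => a :: l) (seq 0 K)) (tuples n' K)
  end.

Definition ind (P : Prop) : R :=
  if excluded_middle_informative P then 1 else 0.

Definition prodf (f : nat -> R) (l : list nat) : R :=
  fold_right (fun a acc => f a * acc) 1 l.

(* P^n_mu restricted to the truncated box {0..K-1}^n *)
Definition trunc_prob (f : nat -> R) (n K : nat) (E : list nat -> Prop) : R :=
  fold_right Rplus 0 (map (fun l => prodf f l * ind (E l)) (tuples n K)).

(* P^n_mu(E) <= c.  Since P^n_mu(E) = sup_K trunc_prob f n K E
   (countable additivity), this is equivalent to the bound. *)
Definition prob_le (f : nat -> R) (n : nat) (E : list nat -> Prop) (c : R) : Prop :=
  forall K, trunc_prob f n K E <= c.

(* Main.v *)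
From Pilot Require Import Defs.
From Stdlib Require Import Reals List Arith.
From Stdlib Require Import Lra Lia ClassicalEpsilon.
From Coquelicot Require Coquelicot.
Open Scope R_scope.

Module AnM.
Import Coquelicot.Coquelicot.

Lemma mono_deriv (F F' : R -> R) a b : a <= b ->
  (forall c, a <= c <= b -> derivable_pt_lim F c (F' c)) ->
  (forall c, a <= c <= b -> 0 <= F' c) -> F a <= F b.
Proof.
  intros Hab HD HP. destruct (Req_dec a b) as [->|Hne]; [lra|].
  destruct (MVT_cor2 F F' a b) as [c [Hc1 Hc2]]; [lra|exact HD|].
  assert (0 <= F' c) by (apply HP; lra).
  assert (0 <= F' c * (b - a)) by (apply Rmult_le_pos; lra). lra.
Qed.

Lemma ln_le_sub1 y : 0 < y -> ln y <= y - 1.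
Proof. intros H. generalize (exp_ineq1_le (ln y)). rewrite exp_ln; lra. Qed.

Lemma ln_ge_1inv y : 0 < y -> 1 - / y <= ln y.
Proof. intros H. generalize (ln_le_sub1 (/ y) (Rinv_0_lt_compat _ H)).
  rewrite ln_Rinv; lra. Qed.

Lemma ln_half y : 1 <= y -> ln y <= (y - / y) / 2.
Proof.
  intros Hy.
  assert (H := mono_deriv (fun y => (y - / y)/2 - ln y)
     (fun y => (1 + / y ^ 2)/2 - / y) 1 y Hy).
  cbv beta in H. rewrite ln_1 in H. replace ((1 - / 1)/2 - 0) with 0 in H by (field).
  cut (0 <= (y - / y) / 2 - ln y); [lra|]. apply H.
  - intros c Hc. apply is_derive_Reals. auto_derive.
    + repeat split; lra.
    + field. lra.
  - intros c Hc. assert (0 < c) by lra.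
    replace ((1 + / c ^ 2) / 2 - / c) with ((1 - / c)^2/2) by (field; lra).
    apply Rmult_le_pos; [apply pow2_ge_0|lra].
Qed.

Lemma hoeff_lemma p l : 0 <= p <= 1 -> 0 <= l ->
  1 - p + p * exp l <= exp (p * l + l ^ 2 / 8).
Proof.
  intros Hp Hl.
  set (D := fun l => 1 - p + p * exp l).
  assert (HD : forall l, 0 < D l).
  { intros x. unfold D. assert (0 < exp x) by apply exp_pos.
    destruct (Rle_lt_dec p 0); [nra|].
    destruct (Rle_lt_dec (exp x) 1); nra. }
  set (psi' := fun l => p + l / 4 - p * exp l / D l).
  assert (Hpsi' : forall c, 0 <= c -> 0 <= psi' c).
  { intros c Hc.
    assert (H := mono_deriv psi' (fun l => / 4 - p * exp l * (1 - p) / (D l) ^ 2) 0 c Hc).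
    assert (psi' 0 = 0). { unfold psi', D. rewrite exp_0. replace (1 - p + p * 1) with 1 by ring. field. }
    cut (psi' 0 <= psi' c); [lra|]. apply H.
    - intros x Hx. apply is_derive_Reals. unfold psi', D. auto_derive.
      + generalize (HD x); unfold D; lra.
      + field. generalize (HD x); unfold D; lra.
    - intros x Hx. generalize (HD x) (exp_pos x). unfold D. intros H1 H2.
      set (e := exp x) in *.
      assert (p * e * (1 - p) / (1 - p + p * e) ^ 2 <= / 4).
      { assert (Hq: p*e*(1-p) <= /4 * (1-p+p*e)^2).
        { generalize (pow2_ge_0 (1-p-p*e)). intros. nra. }
        unfold Rdiv. apply Rle_trans with (/4*(1-p+p*e)^2 * /(1-p+p*e)^2).
        - apply Rmult_le_compat_r; [left; apply Rinv_0_lt_compat; nra | exact Hq].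
        - right; field; lra. }
      lra. }
  assert (H := mono_deriv (fun l => p * l + l ^ 2 / 8 - ln (D l)) psi' 0 l Hl).
  assert (Hle : 0 <= p * l + l ^ 2 / 8 - ln (D l)).
  { assert (H0 : p * 0 + 0 ^ 2 / 8 - ln (D 0) = 0).
    { unfold D. rewrite exp_0. rewrite Rmult_1_r. replace (1 - p + p) with 1 by ring. rewrite ln_1. unfold Rdiv. rewrite Rmult_0_r. simpl. lra. }
    rewrite <- H0 at 1. apply H.
      - intros x Hx. apply is_derive_Reals. unfold psi', D. auto_derive.
        * generalize (HD x); unfold D; lra.
        * field. generalize (HD x); unfold D; lra.
      - intros x Hx. apply Hpsi'. lra. }
  change (1 - p + p * exp l) with (D l).
  rewrite <- (exp_ln (D l)) by apply HD.
  destruct (Req_dec (ln (D l)) (p * l + l ^ 2 / 8)) as [E|E].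
  - rewrite E. lra.
  - left. apply exp_increasing. lra.
Qed.

End AnM.
Import AnM.
Import Pilot.Defs.

Definition lsum {T} (F : T -> R) (L : list T) : R := fold_right Rplus 0 (map F L).

Lemma lsum_nil {T} (F : T -> R) : lsum F nil = 0.
Proof. reflexivity. Qed.
Lemma lsum_cons {T} (F : T -> R) a L : lsum F (a :: L) = F a + lsum F L.
Proof. reflexivity. Qed.
Lemma lsum_app {T} (F : T -> R) L1 L2 : lsum F (L1 ++ L2) = lsum F L1 + lsum F L2.
Proof. induction L1; unfold lsum in *; simpl; [lra|]. rewrite IHL1; lra. Qed.
Lemma lsum_plus {T} (F G : T -> R) L : lsum (fun x => F x + G x) L = lsum F L + lsum G L.
Proof. induction L; [unfold lsum; simpl; lra|]. rewrite !lsum_cons, IHL. lra. Qed.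
Lemma lsum_scal {T} (F : T -> R) c L : lsum (fun x => c * F x) L = c * lsum F L.
Proof. induction L; [unfold lsum; simpl; lra|]. rewrite !lsum_cons, IHL. lra. Qed.
Lemma lsum_ext {T} (F G : T -> R) L : (forall x, In x L -> F x = G x) -> lsum F L = lsum G L.
Proof. induction L; intros H; [reflexivity|]. rewrite !lsum_cons, IHL, H; simpl; auto. intros; apply H; simpl; auto. Qed.
Lemma lsum_le {T} (F G : T -> R) L : (forall x, In x L -> F x <= G x) -> lsum F L <= lsum G L.
Proof. induction L; intros H; [unfold lsum; simpl; lra|]. rewrite !lsum_cons.
  apply Rplus_le_compat; [apply H; simpl; auto|apply IHL; intros; apply H; simpl; auto]. Qed.
Lemma lsum_nonneg {T} (F : T -> R) L : (forall x, In x L -> 0 <= F x) -> 0 <= lsum F L.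
Proof. intros H. replace 0 with (lsum (fun _ => 0) L). apply lsum_le; auto.
  induction L; [reflexivity|]. rewrite lsum_cons, IHL; [lra|]. intros; apply H; simpl; auto. Qed.
Lemma lsum_zero {T} (F : T -> R) L : (forall x, In x L -> F x = 0) -> lsum F L = 0.
Proof. induction L; intros H; [reflexivity|]. rewrite lsum_cons, IHL, H; [lra|simpl; auto|]. intros; apply H; simpl; auto. Qed.
Lemma lsum_map {T U} (F : U -> R) (g : T -> U) L : lsum F (map g L) = lsum (fun x => F (g x)) L.
Proof. unfold lsum. rewrite map_map. reflexivity. Qed.
Lemma lsum_flat_map {T U} (F : U -> R) (g : T -> list U) L :
  lsum F (flat_map g L) = lsum (fun x => lsum F (g x)) L.
Proof. induction L; [reflexivity|]. simpl. rewrite lsum_app, lsum_cons, IHL. reflexivity. Qed.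
Lemma lsum_exchange {T U} (F : T -> U -> R) L1 L2 :
  lsum (fun x => lsum (fun y => F x y) L2) L1 = lsum (fun y => lsum (fun x => F x y) L1) L2.
Proof. induction L1.
  - rewrite lsum_nil. symmetry. apply lsum_zero. intros; reflexivity.
  - rewrite lsum_cons, IHL1. rewrite <- lsum_plus. apply lsum_ext. intros. rewrite lsum_cons. reflexivity. Qed.
Lemma lsum_single_le {T} (F : T -> R) L a : In a L -> (forall x, In x L -> 0 <= F x) -> F a <= lsum F L.
Proof. induction L; intros Ha H; [destruct Ha|]. rewrite lsum_cons. destruct Ha as [<-|Ha].
  - assert (0 <= lsum F L) by (apply lsum_nonneg; intros; apply H; simpl; auto). lra.
  - assert (F a <= lsum F L) by (apply IHL; auto; intros; apply H; simpl; auto).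
    assert (0 <= F a0) by (apply H; simpl; auto). lra. Qed.

Lemma lsum_remove (F : nat -> R) L a : In a L -> NoDup L ->
  lsum F L = F a + lsum F (remove Nat.eq_dec a L).
Proof. induction L; intros Ha Hn; [destruct Ha|]. inversion Hn; subst.
  simpl remove. destruct (Nat.eq_dec a a0) as [<-|Hne].
  - rewrite notin_remove by auto. reflexivity.
  - destruct Ha as [<-|Ha]; [congruence|]. rewrite !lsum_cons, IHL by auto. lra. Qed.

Lemma NoDup_remove' L a : NoDup L -> NoDup (remove Nat.eq_dec a L).
Proof. induction L; intros Hn; simpl; [constructor|]. inversion Hn; subst.
  destruct (Nat.eq_dec a a0); auto. constructor; auto.
  intros H. apply in_remove in H. tauto. Qed.

Lemma lsum_sub_eq (F : nat -> R) L1 L2 : NoDup L1 -> NoDup L2 ->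
  (forall x, In x L1 -> ~ In x L2 -> F x = 0) -> (forall x, In x L2 -> ~ In x L1 -> F x = 0) ->
  lsum F L1 = lsum F L2.
Proof. revert L2; induction L1 as [|a L1 IH]; intros L2 N1 N2 H1 H2.
  - symmetry. apply lsum_zero. intros x Hx. apply H2; auto.
  - inversion N1; subst. rewrite lsum_cons. destruct (in_dec Nat.eq_dec a L2) as [Ha|Ha].
    + rewrite (lsum_remove F L2 a) by auto. rewrite (IH (remove Nat.eq_dec a L2)); auto.
      * apply NoDup_remove'; auto.
      * intros x Hx Hx2. apply H1; [simpl; auto|]. intros Hx3. apply Hx2.
        apply in_in_remove; auto. intros ->; auto.
      * intros x Hx Hx2. apply in_remove in Hx. apply H2; [tauto|]. intros [E|E]; [|tauto]. destruct Hx; auto.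
    + rewrite H1 by (simpl; auto). rewrite (IH L2); auto; [lra| |].
      * intros x Hx Hx2. apply H1; simpl; auto.
      * intros x Hx Hx2. destruct (Nat.eq_dec x a) as [->|]; [tauto|]. apply H2; auto. intros [E|E]; auto.
Qed.

Lemma lsum_sub_le (F : nat -> R) L1 L2 : NoDup L1 -> NoDup L2 ->
  (forall x, In x L1 -> ~ In x L2 -> F x = 0) -> (forall x, In x L2 -> 0 <= F x) ->
  lsum F L1 <= lsum F L2.
Proof. revert L2; induction L1 as [|a L1 IH]; intros L2 N1 N2 H1 H2.
  - rewrite lsum_nil. apply lsum_nonneg; auto.
  - inversion N1; subst. rewrite lsum_cons. destruct (in_dec Nat.eq_dec a L2) as [Ha|Ha].
    + rewrite (lsum_remove F L2 a) by auto.
      assert (lsum F L1 <= lsum F (remove Nat.eq_dec a L2)); [|lra].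
      apply IH; auto.
      * apply NoDup_remove'; auto.
      * intros x Hx Hx2. apply H1; [simpl; auto|]. intros Hx3. apply Hx2.
        apply in_in_remove; auto. intros ->; auto.
      * intros x Hx. apply in_remove in Hx. apply H2; tauto.
    + rewrite H1 by (simpl; auto). assert (lsum F L1 <= lsum F L2); [|lra].
      apply IH; auto. intros x Hx Hx2. apply H1; simpl; auto.
Qed.

Lemma lsum_delta (w : nat -> R) A y : In y A -> NoDup A ->
  lsum (fun a => w a * (if Nat.eq_dec y a then 1 else 0)) A = w y.
Proof. intros Hy Hn. rewrite (lsum_remove _ A y) by auto.
  destruct (Nat.eq_dec y y); [|congruence]. rewrite lsum_zero; [lra|].
  intros x Hx. apply in_remove in Hx. destruct (Nat.eq_dec y x); [subst; tauto|lra]. Qed.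

Lemma sum_f_R0_lsum (w : nat -> R) N : sum_f_R0 w N = lsum w (seq 0 (S N)).
Proof. induction N; [simpl; unfold lsum; simpl; lra|].
  rewrite seq_S, lsum_app. simpl sum_f_R0. rewrite IHN. unfold lsum at 3. simpl. lra. Qed.

Lemma fin_sum (w : nat -> R) A : NoDup A -> (forall x, ~ In x A -> w x = 0) ->
  infinite_sum w (lsum w A).
Proof.
  intros Hn Hz eps Heps.
  exists (S (fold_right Nat.max 0%nat A)). intros N HN.
  rewrite sum_f_R0_lsum. rewrite (lsum_sub_eq w (seq 0 (S N)) A).
  - unfold Rdist. rewrite Rminus_diag, Rabs_R0. lra.
  - apply seq_NoDup.
  - exact Hn.
  - intros x _ Hx. apply Hz; auto.
  - intros x Hx Hx2. exfalso. apply Hx2. apply in_seq. split; [lia|].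
    assert (x <= fold_right Nat.max 0%nat A)%nat; [|lia].
    clear -Hx. induction A; destruct Hx; simpl; subst; [lia|]. specialize (IHA H). lia.
Qed.

Lemma fin_sum_unique (w : nat -> R) A s : NoDup A -> (forall x, ~ In x A -> w x = 0) ->
  infinite_sum w s -> s = lsum w A.
Proof. intros Hn Hz H. eapply uniqueness_sum; [exact H|apply fin_sum; auto]. Qed.

Fixpoint powerset (A : list nat) : list (list nat) :=
  match A with
  | nil => nil :: nil
  | a :: A' => map (cons a) (powerset A') ++ powerset A'
  end.

Lemma powerset_length A : length (powerset A) = (2 ^ length A)%nat.
Proof. induction A; simpl; auto. rewrite length_app, length_map, IHA. lia. Qed.

Lemma filter_in_powerset (P : nat -> bool) A : In (filter P A) (powerset A).
Proof. induction A; simpl; auto. destruct (P a); apply in_or_app; [left; apply in_map|right]; auto. Qed.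


Definition good (f : nat -> R) (A : list nat) : Prop :=
  (forall x, 0 <= f x) /\ NoDup A /\ (forall x, In x A <-> 0 < f x) /\ lsum f A = 1.

Lemma ind_true (P : Prop) : P -> ind P = 1.
Proof. intros H. unfold ind. destruct (excluded_middle_informative P); tauto. Qed.
Lemma ind_false (P : Prop) : ~ P -> ind P = 0.
Proof. intros H. unfold ind. destruct (excluded_middle_informative P); tauto. Qed.
Lemma ind_bounds (P : Prop) : 0 <= ind P <= 1.
Proof. unfold ind. destruct (excluded_middle_informative P); lra. Qed.

Lemma prodf_cons f a l : prodf f (a :: l) = f a * prodf f l.
Proof. reflexivity. Qed.
Lemma prodf_mult f h l : prodf (fun a => f a * h a) l = prodf f l * prodf h l.
Proof. induction l; simpl; [lra|]. rewrite IHl. ring. Qed.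
Lemma prodf_nonneg f l : (forall x, 0 <= f x) -> 0 <= prodf f l.
Proof. intros H; induction l; simpl; [lra|]. apply Rmult_le_pos; auto. Qed.
Lemma prodf_exp g l : prodf (fun y => exp (g y)) l = exp (lsum g l).
Proof. induction l; simpl; [rewrite lsum_nil, exp_0; reflexivity|]. rewrite IHl, lsum_cons, exp_plus. reflexivity. Qed.

Lemma prodf_support f A l : good f A -> prodf f l <> 0 -> forall y, In y l -> In y A.
Proof. intros (Hf & _ & HA & _). induction l; intros Hp y Hy; [destruct Hy|].
  rewrite prodf_cons in Hp. destruct Hy as [<-|Hy].
  - apply HA. destruct (Hf a); auto. exfalso; apply Hp; rewrite <- H; ring.
  - apply IHl; auto. intros E; apply Hp; rewrite E; ring. Qed.

Lemma tuples_length n K l : In l (tuples n K) -> length l = n.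
Proof. revert l; induction n; simpl; intros l H.
  - destruct H as [<-|[]]; reflexivity.
  - apply in_flat_map in H. destruct H as [l' [H1 H2]]. apply in_map_iff in H2.
    destruct H2 as [a [<- _]]. simpl. rewrite IHn; auto. Qed.

Lemma trunc_prob_lsum f n K E :
  trunc_prob f n K E = lsum (fun l => prodf f l * ind (E l)) (tuples n K).
Proof. reflexivity. Qed.

Lemma prod_lemma f h K n N : (N <= n)%nat ->
  lsum (fun l => prodf f l * prodf h (firstn N l)) (tuples n K) =
  (lsum (fun a => f a * h a) (seq 0 K)) ^ N * (lsum f (seq 0 K)) ^ (n - N).
Proof.
  revert N; induction n; intros N HN.
  - assert (N = 0%nat) by lia. subst. simpl. unfold lsum; simpl. lra.
  - simpl tuples. rewrite lsum_flat_map.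
    destruct N as [|N].
    + simpl firstn. rewrite Nat.sub_0_r. simpl pow.
      transitivity (lsum (fun l => lsum f (seq 0 K) * (prodf f l * prodf h (firstn 0 l))) (tuples n K)).
      * apply lsum_ext. intros l _. rewrite lsum_map. simpl.
        rewrite Rmult_comm, <- lsum_scal. apply lsum_ext. intros; ring.
      * rewrite lsum_scal, IHn by lia. simpl. rewrite Nat.sub_0_r. ring.
    + simpl pow. replace (S n - S N)%nat with (n - N)%nat by lia.
      transitivity (lsum (fun l => lsum (fun a => f a * h a) (seq 0 K) * (prodf f l * prodf h (firstn N l))) (tuples n K)).
      * apply lsum_ext. intros l _. rewrite lsum_map. simpl.
        rewrite Rmult_comm, <- lsum_scal. apply lsum_ext. intros; ring.
      * rewrite lsum_scal, IHn by lia. ring.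
Qed.

Lemma seq_le_A f A h K : good f A -> (forall x, 0 <= h x) ->
  lsum (fun a => f a * h a) (seq 0 K) <= lsum (fun a => f a * h a) A.
Proof. intros (Hf & Hn & HA & _) Hh. apply lsum_sub_le; auto.
  - apply seq_NoDup.
  - intros x _ Hx. assert (f x = 0). { destruct (Hf x); auto. exfalso; apply Hx, HA; auto. }
    rewrite H; ring.
  - intros; apply Rmult_le_pos; auto. Qed.

Lemma prod_bound f A h K n N : good f A -> (forall x, 0 <= h x) -> (N <= n)%nat ->
  lsum (fun l => prodf f l * prodf h (firstn N l)) (tuples n K) <=
  (lsum (fun a => f a * h a) A) ^ N.
Proof. intros Hg Hh HN. rewrite prod_lemma by auto.
  assert (H1 := seq_le_A f A h K Hg Hh).
  assert (H2 := seq_le_A f A (fun _ => 1) K Hg (fun _ => Rle_0_1)).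
  destruct Hg as (Hf & Hn & HA & Hs).
  assert (E1 : lsum (fun a => f a * 1) A = 1) by (transitivity (lsum f A); [apply lsum_ext; intros; ring|exact Hs]).
  assert (E2 : lsum (fun a => f a * 1) (seq 0 K) = lsum f (seq 0 K)) by (apply lsum_ext; intros; ring).
  assert (0 <= lsum (fun a => f a * h a) (seq 0 K)) by (apply lsum_nonneg; intros; apply Rmult_le_pos; auto).
  assert (0 <= lsum f (seq 0 K)) by (apply lsum_nonneg; intros; auto).
  cbv beta in H2.
  apply Rle_trans with (lsum (fun a => f a * h a) A ^ N * 1); [|right; ring].
  apply Rmult_le_compat.
  - apply pow_le; auto.
  - apply pow_le; auto.
  - apply pow_incr; auto.
  - rewrite <- (pow1 (n - N)). apply pow_incr. lra.
Qed.

Lemma tp_bound f A n K E G : good f A -> (forall l, 0 <= G l) ->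
  (forall l, length l = n -> (forall y, In y l -> In y A) -> E l -> 1 <= G l) ->
  trunc_prob f n K E <= lsum (fun l => prodf f l * G l) (tuples n K).
Proof. intros Hg HG H. rewrite trunc_prob_lsum. apply lsum_le. intros l Hl.
  destruct (Req_dec (prodf f l) 0) as [E0|E0]; [rewrite E0; rewrite !Rmult_0_l; lra|].
  assert (0 <= prodf f l) by (apply prodf_nonneg; apply Hg).
  apply Rmult_le_compat_l; auto.
  destruct (classic (E l)) as [He|He].
  - rewrite ind_true by auto. apply H; auto. apply tuples_length in Hl; auto.
    apply (prodf_support f A l Hg E0).
  - rewrite ind_false by auto. auto.
Qed.

Lemma tp_mono f A n K E E' : good f A ->
  (forall l, length l = n -> (forall y, In y l -> In y A) -> E l -> E' l) ->
  trunc_prob f n K E <= trunc_prob f n K E'.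
Proof. intros Hg H. rewrite (trunc_prob_lsum f n K E'). apply tp_bound with A; auto.
  - intros; apply ind_bounds.
  - intros l H1 H2 H3. rewrite ind_true; auto. lra. Qed.

Lemma tp_or f A n K E E1 E2 : good f A ->
  (forall l, length l = n -> (forall y, In y l -> In y A) -> E l -> E1 l \/ E2 l) ->
  trunc_prob f n K E <= trunc_prob f n K E1 + trunc_prob f n K E2.
Proof. intros Hg H. rewrite !(trunc_prob_lsum f n K), <- lsum_plus.
  apply Rle_trans with (lsum (fun l => prodf f l * (ind (E1 l) + ind (E2 l))) (tuples n K)).
  - apply tp_bound with A; auto.
    + intros; generalize (ind_bounds (E1 l)) (ind_bounds (E2 l)); lra.
    + intros l H1 H2 H3. destruct (H l H1 H2 H3) as [X|X].
      * rewrite (ind_true _ X). generalize (ind_bounds (E2 l)); lra.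
      * rewrite (ind_true _ X). generalize (ind_bounds (E1 l)); lra.
  - right. apply lsum_ext. intros; ring.
Qed.

Lemma tp_union {T} f A n K E (F : T -> list nat -> Prop) Ss : good f A ->
  (forall l, length l = n -> (forall y, In y l -> In y A) -> E l -> exists S, In S Ss /\ F S l) ->
  trunc_prob f n K E <= lsum (fun S => trunc_prob f n K (F S)) Ss.
Proof. intros Hg H.
  rewrite (lsum_ext _ (fun S => lsum (fun l => prodf f l * ind (F S l)) (tuples n K)) Ss) by (intros; reflexivity).
  rewrite lsum_exchange.
  apply Rle_trans with (lsum (fun l => prodf f l * lsum (fun S => ind (F S l)) Ss) (tuples n K)).
  - apply tp_bound with A; auto.
    + intros; apply lsum_nonneg; intros; apply ind_bounds.
    + intros l H1 H2 H3. destruct (H l H1 H2 H3) as [S [HS HF]].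
      rewrite <- (ind_true _ HF). apply (lsum_single_le (fun S => ind (F S l))); auto.
      intros; apply ind_bounds.
  - right. apply lsum_ext. intros; rewrite <- lsum_scal. reflexivity.
Qed.

Lemma exp_pow x n : exp x ^ n = exp (INR n * x).
Proof. induction n; simpl pow; [rewrite Rmult_0_l, exp_0; reflexivity|].
  rewrite IHn, <- exp_plus, S_INR. f_equal; ring. Qed.

Lemma one_le_exp x : 0 <= x -> 1 <= exp x.
Proof. intros. generalize (exp_ineq1_le x). lra. Qed.

Lemma hoeffding f A g n K s : good f A -> (forall y, g y = 0 \/ g y = 1) -> 0 <= s -> (1 <= n)%nat ->
  trunc_prob f n K (fun l => s <= lsum g l / INR n - lsum (fun a => f a * g a) A)
  <= exp (- (2 * INR n * s ^ 2)).
Proof.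
  intros Hg Hg01 Hs Hn.
  set (mu := lsum (fun a => f a * g a) A).
  set (lam := 4 * s).
  assert (HnR : 0 < INR n) by (apply lt_0_INR; lia).
  set (c := exp (- (lam * INR n * (mu + s)))).
  set (h := fun y => exp (lam * g y)).
  assert (Hgpos : forall y, 0 <= g y) by (intros y; destruct (Hg01 y); lra).
  destruct Hg as (Hf & HnA & HA & Hs1).
  assert (Hmu0 : 0 <= mu) by (apply lsum_nonneg; intros; apply Rmult_le_pos; auto).
  assert (Hmu1 : mu <= 1).
  { rewrite <- Hs1. apply lsum_le. intros x _. destruct (Hg01 x) as [E|E]; rewrite E; generalize (Hf x); lra. }
  assert (Hg : good f A) by (repeat split; auto; apply HA).
  eapply Rle_trans.
  { apply tp_bound with (A := A) (G := fun l => c * prodf h (firstn n l)); auto.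
    - intros l. apply Rmult_le_pos; [left; apply exp_pos|]. apply prodf_nonneg. intros; left; apply exp_pos.
    - intros l Hl _ HE. rewrite firstn_all2 by lia. unfold h. rewrite prodf_exp. unfold c. rewrite <- exp_plus.
      apply one_le_exp. rewrite lsum_scal.
      assert (s * INR n <= lsum g l - mu * INR n).
      { apply Rmult_le_compat_r with (r := INR n) in HE; [|lra].
        replace ((lsum g l / INR n - mu) * INR n) with (lsum g l - mu * INR n) in HE by (field; lra). exact HE. }
      assert (0 <= lam) by (unfold lam; lra).
      assert (0 <= lam * (lsum g l - mu * INR n - s * INR n)) by (apply Rmult_le_pos; lra).
      lra. }
  rewrite (lsum_ext _ (fun l => c * (prodf f l * prodf h (firstn n l)))) by (intros; ring).
  rewrite lsum_scal.
  assert (Hsum : lsum (fun a => f a * h a) A = 1 - mu + mu * exp lam).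
  { transitivity (lsum (fun a => f a + (exp lam - 1) * (f a * g a)) A).
    - apply lsum_ext. intros x _. unfold h. destruct (Hg01 x) as [E|E]; rewrite E.
      + rewrite Rmult_0_r, exp_0. ring.
      + rewrite Rmult_1_r. ring.
    - rewrite lsum_plus, lsum_scal, Hs1. fold mu. ring. }
  assert (Hb := prod_bound f A h K n n Hg (fun x => Rlt_le _ _ (exp_pos _)) (Nat.le_refl n)).
  rewrite Hsum in Hb.
  assert (Hhl := hoeff_lemma mu lam (conj Hmu0 Hmu1) ltac:(unfold lam; lra)).
  assert (0 <= 1 - mu + mu * exp lam) by (generalize (exp_pos lam); nra).
  assert (Hc : 0 < c) by apply exp_pos.
  apply Rle_trans with (c * exp (mu * lam + lam ^ 2 / 8) ^ n).
  { apply Rmult_le_compat_l; [lra|]. eapply Rle_trans; [exact Hb|]. apply pow_incr; lra. }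
  unfold c. rewrite exp_pow, <- exp_plus. right. f_equal. unfold lam. field.
Qed.


Lemma count_sum (w : nat -> R) A l : NoDup A -> (forall y, In y l -> In y A) ->
  lsum (fun x => w x * INR (count_occ Nat.eq_dec l x)) A = lsum w l.
Proof. intros Hn; induction l as [|y l IH]; intros Hl.
  - rewrite lsum_nil. apply lsum_zero. intros; simpl; ring.
  - rewrite lsum_cons. rewrite <- IH by (intros; apply Hl; simpl; auto).
    rewrite <- (lsum_delta w A y) by (auto; apply Hl; simpl; auto).
    rewrite <- lsum_plus. apply lsum_ext. intros x _. simpl.
    destruct (Nat.eq_dec y x); [rewrite S_INR|]; ring. Qed.

Lemma emp_nonneg l x : 0 <= emp l x.
Proof. unfold emp. destruct (length l) eqn:E.
  - simpl. rewrite Rdiv_0_r. lra.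
  - apply Rmult_le_pos; [apply pos_INR|]. left; apply Rinv_0_lt_compat. apply lt_0_INR; lia. Qed.

Lemma count_le l x : (count_occ Nat.eq_dec l x <= length l)%nat.
Proof. induction l; simpl; auto. destruct (Nat.eq_dec a x); lia. Qed.

Lemma emp_le1 l x : emp l x <= 1.
Proof. unfold emp. destruct (length l) eqn:E.
  - simpl. rewrite Rdiv_0_r. lra.
  - assert (0 < INR (S n)) by (apply lt_0_INR; lia).
    apply (Rmult_le_reg_r (INR (S n))); auto. unfold Rdiv. rewrite Rmult_assoc, Rinv_l by lra.
    rewrite Rmult_1_r, Rmult_1_l. apply le_INR. rewrite <- E. apply count_le. Qed.

Lemma emp_out l x : ~ In x l -> emp l x = 0.
Proof. intros H. unfold emp. apply (count_occ_not_In Nat.eq_dec) in H. rewrite H. simpl. unfold Rdiv. ring. Qed.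

Lemma emp_pos l x : In x l -> 0 < emp l x.
Proof. intros H. unfold emp. apply (count_occ_In Nat.eq_dec) in H.
  assert (length l <> 0%nat) by (destruct l; simpl in *; lia).
  apply Rdiv_lt_0_compat; apply lt_0_INR; lia. Qed.

Lemma emp_sum A l : NoDup A -> (forall y, In y l -> In y A) -> (1 <= length l)%nat ->
  lsum (emp l) A = 1.
Proof. intros Hn Hl Hlen.
  assert (H := count_sum (fun _ => / INR (length l)) A l Hn Hl).
  assert (0 < INR (length l)) by (apply lt_0_INR; lia).
  transitivity (lsum (fun _ => / INR (length l)) l).
  - rewrite <- H. apply lsum_ext. intros. unfold emp. unfold Rdiv. ring.
  - clear H. assert (forall L : list nat, lsum (fun _ => / INR (length l)) L = INR (length L) * / INR (length l)).
    { induction L; [rewrite lsum_nil; simpl; ring|]. rewrite lsum_cons, IHL, length_cons, S_INR. ring. }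
    rewrite H. field. lra. Qed.

Definition TV (f : nat -> R) (A : list nat) (l : list nat) : R :=
  lsum (fun x => Rmax 0 (emp l x - f x)) A.
Definition TV2 (f : nat -> R) (A : list nat) (l : list nat) : R :=
  lsum (fun x => Rmax 0 (f x - emp l x)) A.

Lemma TV_nonneg f A l : 0 <= TV f A l.
Proof. apply lsum_nonneg. intros; apply Rmax_l. Qed.

Lemma TV_eq f A l : good f A -> (forall y, In y l -> In y A) -> (1 <= length l)%nat ->
  TV2 f A l = TV f A l.
Proof. intros (Hf & Hn & HA & Hs) Hl Hlen. assert (Hp := emp_sum A l Hn Hl Hlen).
  assert (E : TV f A l - TV2 f A l = lsum (emp l) A - lsum f A).
  { unfold TV, TV2. rewrite <- (Rmult_1_l (lsum (fun x => Rmax 0 (f x - emp l x)) A)).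
    rewrite <- (Rmult_1_l (lsum f A)).
    replace (lsum (fun x => Rmax 0 (emp l x - f x)) A - 1 * lsum (fun x => Rmax 0 (f x - emp l x)) A)
      with (lsum (fun x => Rmax 0 (emp l x - f x)) A + (-1) * lsum (fun x => Rmax 0 (f x - emp l x)) A) by ring.
    replace (lsum (emp l) A - 1 * lsum f A) with (lsum (emp l) A + (-1) * lsum f A) by ring.
    rewrite <- !lsum_scal, <- !lsum_plus. apply lsum_ext. intros x _.
    destruct (Rle_dec (emp l x) (f x)).
    - rewrite Rmax_left by lra. rewrite Rmax_right by lra. ring.
    - rewrite Rmax_right by lra. rewrite Rmax_left by lra. ring. }
  lra. Qed.

Lemma TV2_ge f A l x : In x A -> Rmax 0 (f x - emp l x) <= TV2 f A l.
Proof. intros H. apply (lsum_single_le (fun x => Rmax 0 (f x - emp l x))); auto. intros; apply Rmax_l. Qed.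
Lemma TV_ge f A l x : In x A -> Rmax 0 (emp l x - f x) <= TV f A l.
Proof. intros H. apply (lsum_single_le (fun x => Rmax 0 (emp l x - f x))); auto. intros; apply Rmax_l. Qed.

Definition gS (S : list nat) (y : nat) : R := if in_dec Nat.eq_dec y S then 1 else 0.

Lemma tv_event f A l n s : good f A -> length l = n -> (1 <= n)%nat -> (forall y, In y l -> In y A) ->
  s <= TV f A l -> exists S, In S (powerset A) /\
    s <= lsum (gS S) l / INR n - lsum (fun a => f a * gS S a) A.
Proof.
  intros Hg Hlen Hn Hl Hs. destruct Hg as (Hf & HnA & HA & Hs1).
  exists (filter (fun x => if Rlt_dec (f x) (emp l x) then true else false) A).
  split; [apply filter_in_powerset|].
  set (S := filter _ A).
  rewrite <- (count_sum (gS S) A l) by auto.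
  assert (0 < INR n) by (apply lt_0_INR; lia).
  replace (lsum (fun x => gS S x * INR (count_occ Nat.eq_dec l x)) A / INR n - lsum (fun a => f a * gS S a) A)
   with (lsum (fun x => gS S x * (emp l x - f x)) A).
  - eapply Rle_trans; [exact Hs|]. right. apply lsum_ext. intros x Hx. unfold gS.
    destruct (in_dec Nat.eq_dec x S) as [i|i]; unfold S in i; rewrite filter_In in i.
    + destruct (Rlt_dec (f x) (emp l x)); [|destruct i; discriminate].
      rewrite Rmax_right by lra. ring.
    + destruct (Rlt_dec (f x) (emp l x)); [tauto|]. rewrite Rmax_left by lra. ring.
  - unfold Rdiv. rewrite Rmult_comm, <- lsum_scal.
    replace (lsum (fun x => / INR n * (gS S x * INR (count_occ Nat.eq_dec l x))) A - lsum (fun a => f a * gS S a) A)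
      with (lsum (fun x => / INR n * (gS S x * INR (count_occ Nat.eq_dec l x))) A + (-1) * lsum (fun a => f a * gS S a) A) by ring.
    rewrite <- lsum_scal, <- lsum_plus. apply lsum_ext. intros x _. unfold emp. rewrite Hlen. field. lra.
Qed.

Lemma gS01 S y : gS S y = 0 \/ gS S y = 1.
Proof. unfold gS. destruct (in_dec Nat.eq_dec y S); auto. Qed.

Lemma lsum_const {T} c (L : list T) : lsum (fun _ => c) L = INR (length L) * c.
Proof. induction L; [rewrite lsum_nil; simpl; ring|]. rewrite lsum_cons, IHL, length_cons, S_INR. ring. Qed.

Lemma TV_bound f A n K s : good f A -> 0 <= s -> (1 <= n)%nat ->
  trunc_prob f n K (fun l => s <= TV f A l) <= 2 ^ length A * exp (- (2 * INR n * s ^ 2)).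
Proof.
  intros Hg Hs Hn.
  eapply Rle_trans.
  { apply (tp_union f A n K _ (fun S l => s <= lsum (gS S) l / INR n - lsum (fun a => f a * gS S a) A) (powerset A) Hg).
    intros l Hl HlA HE. apply (tv_event f A l n s); auto. }
  eapply Rle_trans.
  { apply lsum_le. intros S _. apply hoeffding; auto. apply gS01. }
  rewrite lsum_const, powerset_length, pow_INR. simpl INR. replace (1 + 1) with 2 by ring. lra.
Qed.


Lemma ln_div x y : 0 < x -> 0 < y -> ln (x / y) = ln x - ln y.
Proof. intros. unfold Rdiv. rewrite ln_mult, ln_Rinv; auto. apply Rinv_0_lt_compat; auto. Qed.
Lemma ln_le x y : 0 < x -> x <= y -> ln x <= ln y.
Proof. intros H1 H2. destruct H2 as [H2|<-]; [left; apply ln_increasing; auto|lra]. Qed.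

Lemma kl_pt P Q m : 0 < P <= 1 -> m <= Q -> 0 < m ->
  P * ln (P / Q) <= Rmax 0 (P - Q) / m.
Proof. intros HP HQ Hm. assert (HQ0 : 0 < Q) by lra.
  set (r := P / Q). assert (Hr : 0 < r) by (apply Rdiv_lt_0_compat; lra).
  assert (H1 := ln_le_sub1 r Hr).
  apply Rle_trans with (P * (r - 1)); [apply Rmult_le_compat_l; lra|].
  replace (P * (r - 1)) with ((P - Q) * r) by (unfold r; field; lra).
  destruct (Rle_dec P Q).
  - rewrite Rmax_left by lra. unfold Rdiv; rewrite Rmult_0_l.
    assert (0 <= (Q - P) * r) by (apply Rmult_le_pos; lra). lra.
  - rewrite Rmax_right by lra. unfold Rdiv. apply Rmult_le_compat_l; [lra|].
    unfold r. unfold Rdiv. apply (Rmult_le_reg_r (Q * m)); [nra|].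
    replace (P * / Q * (Q * m)) with (P * m) by (field; lra).
    replace (/ m * (Q * m)) with Q by (field; lra). nra.
Qed.

Lemma kl_ge P Q : 0 < P -> 0 < Q -> P - Q <= P * ln (P / Q).
Proof. intros. assert (H1 := ln_ge_1inv (P / Q) ltac:(apply Rdiv_lt_0_compat; lra)).
  replace (/ (P / Q)) with (Q / P) in H1 by (field; lra).
  replace (P - Q) with (P * (1 - Q / P)) by (field; lra). apply Rmult_le_compat_l; lra. Qed.

Lemma rev_pt P Q m T : 0 < P <= 1 -> m <= Q <= 1 -> 0 < m -> T < m ->
  Rmax 0 (Q - P) <= T -> Rmax 0 (P - Q) <= T ->
  Q * ln (Q / P) <= (Q - P) + Rmax 0 (Q - P) * (T / (2 * (m - T))) + Rmax 0 (P - Q) * (T / m).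
Proof. intros HP HQ Hm HT H1 H2.
  destruct (Rlt_dec P Q) as [Hlt|Hge].
  - rewrite (Rmax_right 0 (Q - P)) in * by lra. rewrite (Rmax_left 0 (P - Q)) in * by lra.
    assert (Hy := ln_half (Q / P) ltac:(apply (Rmult_le_reg_r P); [lra|]; unfold Rdiv; rewrite Rmult_assoc, Rinv_l; lra)).
    apply Rle_trans with (Q * ((Q / P - / (Q / P)) / 2)); [apply Rmult_le_compat_l; lra|].
    replace (Q * ((Q / P - / (Q / P)) / 2)) with ((Q - P) + (Q - P) * ((Q - P) / (2 * P))) by (field; lra).
    rewrite Rmult_0_l, Rplus_0_r. apply Rplus_le_compat_l. apply Rmult_le_compat_l; [lra|].
    unfold Rdiv. apply (Rmult_le_reg_r (2 * P * (m - T))). nra.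
    replace ((Q - P) * / (2 * P) * (2 * P * (m - T))) with ((Q - P) * (m - T)) by (field; lra).
    replace (T * / (2 * (m - T)) * (2 * P * (m - T))) with (T * P) by (field; lra).
    nra.
  - rewrite (Rmax_left 0 (Q - P)) in * by lra. rewrite (Rmax_right 0 (P - Q)) in * by lra.
    assert (HQ0 : 0 < Q) by lra.
    assert (H3 := ln_le_sub1 (Q / P) ltac:(apply Rdiv_lt_0_compat; lra)).
    apply Rle_trans with (Q * (Q / P - 1)); [apply Rmult_le_compat_l; lra|].
    replace (Q * (Q / P - 1)) with ((Q - P) + (P - Q) * ((P - Q) / P)) by (field; lra).
    rewrite Rmult_0_l, Rplus_0_r. apply Rplus_le_compat_l. apply Rmult_le_compat_l; [lra|].
    unfold Rdiv. apply (Rmult_le_reg_r (P * m)). nra.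
    replace ((P - Q) * / P * (P * m)) with ((P - Q) * m) by (field; lra).
    replace (T * / m * (P * m)) with (T * P) by (field; lra).
    nra.
Qed.

Section S.
Lemma lnb_pos b : 1 < b -> 0 < ln b.
Proof. intros. rewrite <- ln_1. apply ln_increasing; lra. Qed.

Lemma div_le_L X Y L : 0 < L -> X <= Y -> X / L <= Y / L.
Proof. intros. unfold Rdiv. apply Rmult_le_compat_r; auto. left; apply Rinv_0_lt_compat; auto. Qed.

Lemma D1pt b p q m x : 1 < b -> 0 < m -> m <= q x -> 0 <= p x <= 1 ->
  div_term b p q x <= (1 / ln b) / m * Rmax 0 (p x - q x).
Proof. intros Hb Hm Hq Hp. assert (L := lnb_pos b Hb). unfold div_term, logb.
  destruct (Rlt_dec 0 (p x)).
  - replace (p x * (ln (p x / q x) / ln b)) with ((p x * ln (p x / q x)) / ln b) by (field; lra).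
    replace (1 / ln b / m * Rmax 0 (p x - q x)) with ((Rmax 0 (p x - q x) / m) / ln b) by (field; lra).
    apply div_le_L; auto. apply kl_pt; lra.
  - assert (0 <= Rmax 0 (p x - q x)) by apply Rmax_l.
    assert (0 <= 1 / ln b / m) by (unfold Rdiv; apply Rmult_le_pos; [apply Rmult_le_pos; [lra|left; apply Rinv_0_lt_compat; lra]|left; apply Rinv_0_lt_compat; lra]).
    apply Rmult_le_pos; auto.
Qed.

Lemma ent_q b q x : 0 < q x -> ent_term b q x = - (q x * (ln (q x) / ln b)).
Proof. intros. unfold ent_term, logb. destruct (Rlt_dec 0 (q x)); [reflexivity|lra]. Qed.

Lemma Hup_pt b p q m x : 1 < b -> 0 < m -> m <= q x <= 1 -> 0 <= p x <= 1 ->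
  ent_term b p x - ent_term b q x <=
  (1 / ln b) * (Rmax 0 (q x - p x) * ln (1 / m) + (q x - p x) * (1 + ln m)).
Proof. intros Hb Hm Hq Hp. assert (L := lnb_pos b Hb).
  rewrite (ent_q b q x) by lra.
  assert (Hlq : ln m <= ln (q x)) by (apply ln_le; lra).
  assert (Hlq1 : ln (q x) <= 0) by (rewrite <- ln_1; apply ln_le; lra).
  assert (Hlm : ln (1 / m) = - ln m) by (unfold Rdiv; rewrite Rmult_1_l, ln_Rinv; auto).
  rewrite Hlm.
  assert (Key : forall E, E <= (q x - p x) * (ln (q x) + 1) ->
     E / ln b <= (1 / ln b) * (Rmax 0 (q x - p x) * - ln m + (q x - p x) * (1 + ln m))).
  { intros E HE. replace ((1 / ln b) * (Rmax 0 (q x - p x) * - ln m + (q x - p x) * (1 + ln m)))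
      with ((Rmax 0 (q x - p x) * - ln m + (q x - p x) * (1 + ln m)) / ln b) by (field; lra).
    apply div_le_L; auto. eapply Rle_trans; [exact HE|].
    destruct (Rle_dec (p x) (q x)).
    - rewrite Rmax_right by lra. nra.
    - rewrite Rmax_left by lra. nra. }
  unfold ent_term at 1, logb. destruct (Rlt_dec 0 (p x)).
  - replace (- (p x * (ln (p x) / ln b)) - - (q x * (ln (q x) / ln b)))
      with ((- (p x * ln (p x)) + q x * ln (q x)) / ln b) by (field; lra).
    apply Key. assert (H := kl_ge (p x) (q x) r ltac:(lra)). rewrite ln_div in H by lra. nra.
  - replace (0 - - (q x * (ln (q x) / ln b))) with ((q x * ln (q x)) / ln b) by (field; lra).
    apply Key. nra.
Qed.

Lemma Hlo_pt b p q m x : 1 < b -> 0 < m -> m <= q x <= 1 -> 0 <= p x <= 1 ->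
  ent_term b q x - ent_term b p x <=
  (1 / ln b) * (Rmax 0 (p x - q x) * (1 / m + ln (1 / m)) + (p x - q x) * ln m).
Proof. intros Hb Hm Hq Hp. assert (L := lnb_pos b Hb).
  rewrite (ent_q b q x) by lra.
  assert (Hlq : ln m <= ln (q x)) by (apply ln_le; lra).
  assert (Hlq1 : ln (q x) <= 0) by (rewrite <- ln_1; apply ln_le; lra).
  assert (Hlm : ln (1 / m) = - ln m) by (unfold Rdiv; rewrite Rmult_1_l, ln_Rinv; auto).
  rewrite Hlm.
  assert (Hmx : (p x - q x) * (ln (q x) - ln m) <= Rmax 0 (p x - q x) * - ln m).
  { destruct (Rle_dec (p x) (q x)).
    - rewrite Rmax_left by lra. nra.
    - rewrite Rmax_right by lra. nra. }
  assert (Hr : 0 <= Rmax 0 (p x - q x)) by apply Rmax_l.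
  unfold ent_term, logb. destruct (Rlt_dec 0 (p x)).
  - replace (- (q x * (ln (q x) / ln b)) - - (p x * (ln (p x) / ln b)))
      with ((p x * ln (p x / q x) + (p x - q x) * ln (q x)) / ln b) by (rewrite ln_div by lra; field; lra).
    replace ((1 / ln b) * (Rmax 0 (p x - q x) * (1 / m + - ln m) + (p x - q x) * ln m))
      with ((Rmax 0 (p x - q x) / m + (Rmax 0 (p x - q x) * - ln m + (p x - q x) * ln m)) / ln b) by (field; lra).
    apply div_le_L; auto. apply Rplus_le_compat; [apply kl_pt; lra|]. nra.
  - replace (- (q x * (ln (q x) / ln b)) - 0) with ((- (q x * ln (q x))) / ln b) by (field; lra).
    replace ((1 / ln b) * (Rmax 0 (p x - q x) * (1 / m + - ln m) + (p x - q x) * ln m))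
      with ((Rmax 0 (p x - q x) / m + (Rmax 0 (p x - q x) * - ln m + (p x - q x) * ln m)) / ln b) by (field; lra).
    apply div_le_L; auto.
    assert (0 <= Rmax 0 (p x - q x) / m) by (unfold Rdiv; apply Rmult_le_pos; [lra|left; apply Rinv_0_lt_compat; lra]).
    assert (p x = 0) by lra. rewrite H0 in *. nra.
Qed.

Lemma D3pt b p q m T x : 1 < b -> 0 < m -> m <= q x <= 1 -> 0 < p x <= 1 -> T < m ->
  Rmax 0 (q x - p x) <= T -> Rmax 0 (p x - q x) <= T ->
  div_term b q p x <= (1 / ln b) * ((q x - p x) + Rmax 0 (q x - p x) * (T / (2 * (m - T))) + Rmax 0 (p x - q x) * (T / m)).
Proof. intros Hb Hm Hq Hp HT H1 H2. assert (L := lnb_pos b Hb).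
  unfold div_term, logb. destruct (Rlt_dec 0 (q x)); [|lra].
  replace (q x * (ln (q x / p x) / ln b)) with ((q x * ln (q x / p x)) / ln b) by (field; lra).
  replace ((1 / ln b) * ((q x - p x) + Rmax 0 (q x - p x) * (T / (2 * (m - T))) + Rmax 0 (p x - q x) * (T / m)))
    with (((q x - p x) + Rmax 0 (q x - p x) * (T / (2 * (m - T))) + Rmax 0 (p x - q x) * (T / m)) / ln b) by (field; lra).
  apply div_le_L; auto. apply rev_pt; lra.
Qed.
End S.


Lemma lsum_minus {T} (F G : T -> R) L : lsum (fun x => F x - G x) L = lsum F L - lsum G L.
Proof. replace (lsum F L - lsum G L) with (lsum F L + (-1) * lsum G L) by ring.
  rewrite <- lsum_scal, <- lsum_plus. apply lsum_ext; intros; ring. Qed.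

Lemma emp_off f A l x : good f A -> (forall y, In y l -> In y A) -> ~ In x A -> emp l x = 0.
Proof. intros _ Hl Hx. apply emp_out. intros H; apply Hx, Hl, H. Qed.

Lemma f_off f A x : good f A -> ~ In x A -> f x = 0.
Proof. intros (Hf & _ & HA & _) Hx. destruct (Hf x); auto. exfalso; apply Hx, HA; auto. Qed.

Lemma f_le1 f A x : good f A -> In x A -> f x <= 1.
Proof. intros (Hf & Hn & HA & Hs) Hx. rewrite <- Hs. apply (lsum_single_le f A x Hx). intros; auto. Qed.

Lemma trunc_false f n K : trunc_prob f n K (fun _ => False) = 0.
Proof. rewrite trunc_prob_lsum. apply lsum_zero. intros. rewrite ind_false; [ring|tauto]. Qed.

Lemma In_firstn_le {T} (x : T) N k l : (N <= k)%nat -> In x (firstn N l) -> In x (firstn k l).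
Proof. intros Hk H. assert (E : firstn N l = firstn N (firstn k l)).
  { rewrite firstn_firstn. f_equal. lia. }
  rewrite E in H. rewrite <- (firstn_skipn N (firstn k l)). apply in_or_app. auto. Qed.

Lemma D_finite_fin b f A p : good f A -> (forall x, In x A -> 0 < p x) -> D_finite b f p.
Proof. intros Hg Hp. exists (lsum (div_term b f p) A). split.
  - intros x Hx. destruct (in_dec Nat.eq_dec x A) as [i|i]; [specialize (Hp x i); lra|]. apply (f_off f A); auto.
  - apply fin_sum; [apply Hg|]. intros x Hx. unfold div_term. rewrite (f_off f A x Hg Hx).
    destruct (Rlt_dec 0 0); [lra|reflexivity].
Qed.

Lemma emp_facts f A b l : good f A -> (forall y, In y l -> In y A) ->
  abs_cont (emp l) f /\ H_is b (emp l) (lsum (ent_term b (emp l)) A) /\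
  D_is b (emp l) f (lsum (div_term b (emp l) f) A).
Proof. intros Hg Hl.
  assert (Hac : abs_cont (emp l) f).
  { intros x Hx. destruct (in_dec Nat.eq_dec x A) as [i|i].
    - destruct Hg as (_ & _ & HA & _). apply HA in i. lra.
    - apply (emp_off f A); auto. }
  split; [auto|split; [|split; auto]].
  - apply fin_sum; [apply Hg|]. intros x Hx. unfold ent_term. rewrite (emp_off f A l x Hg Hl Hx).
    destruct (Rlt_dec 0 0); [lra|reflexivity].
  - apply fin_sum; [apply Hg|]. intros x Hx. unfold div_term. rewrite (emp_off f A l x Hg Hl Hx).
    destruct (Rlt_dec 0 0); [lra|reflexivity].
Qed.

Lemma H_is_f f A b : good f A -> H_is b f (lsum (ent_term b f) A).
Proof. intros Hg. apply fin_sum; [apply Hg|]. intros x Hx. unfold ent_term. rewrite (f_off f A x Hg Hx).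
  destruct (Rlt_dec 0 0); [lra|reflexivity]. Qed.

Lemma D1sum b f A m l : 1 < b -> good f A -> 0 < m -> (forall x, In x A -> m <= f x) ->
  lsum (div_term b (emp l) f) A <= (1 / ln b) / m * TV f A l.
Proof. intros Hb Hg Hm HmA. unfold TV. rewrite <- lsum_scal. apply lsum_le. intros x Hx.
  apply D1pt; auto. split; [apply emp_nonneg|apply emp_le1]. Qed.

Lemma Hsum b f A m l : 1 < b -> good f A -> 0 < m -> (forall x, In x A -> m <= f x) ->
  (forall y, In y l -> In y A) -> (1 <= length l)%nat ->
  Rabs (lsum (ent_term b (emp l)) A - lsum (ent_term b f) A) <=
  (logb b (1 / m) + (1 / ln b) / m) * TV f A l.
Proof. intros Hb Hg Hm HmA Hl Hlen.
  assert (L := lnb_pos b Hb).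
  assert (Hp1 := emp_sum A l (proj1 (proj2 Hg)) Hl Hlen).
  assert (Hf1 : lsum f A = 1) by apply Hg.
  assert (HTV := TV_eq f A l Hg Hl Hlen).
  assert (Hq : forall x, In x A -> m <= f x <= 1) by (intros; split; [auto|apply (f_le1 f A); auto]).
  assert (Hp : forall x, 0 <= emp l x <= 1) by (intros; split; [apply emp_nonneg|apply emp_le1]).
  assert (Hm1 : m <= 1).
  { destruct A as [|a A'].
    - rewrite lsum_nil in Hf1. lra.
    - apply Rle_trans with (f a); [apply HmA; simpl; auto|apply (f_le1 f (a :: A')); simpl; auto]. }
  assert (Hlm : 0 <= ln (1 / m)).
  { rewrite <- ln_1. apply ln_le; [lra|]. unfold Rdiv. rewrite Rmult_1_l.
    apply (Rmult_le_reg_l m); [lra|]. rewrite Rinv_r by lra. lra. }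
  assert (HT0 := TV_nonneg f A l).
  assert (Up : lsum (ent_term b (emp l)) A - lsum (ent_term b f) A <= (1 / ln b) * ln (1 / m) * TV f A l).
  { rewrite <- lsum_minus. eapply Rle_trans.
    { apply lsum_le. intros x Hx. apply (Hup_pt b (emp l) f m x); auto. }
    rewrite (lsum_ext _ (fun x => ((1 / ln b) * ln (1 / m)) * Rmax 0 (f x - emp l x) + ((1 / ln b) * (1 + ln m)) * (f x - emp l x)))
      by (intros; ring).
    rewrite lsum_plus, !lsum_scal, lsum_minus, Hp1, Hf1. fold (TV2 f A l). rewrite HTV. lra. }
  assert (Lo : lsum (ent_term b f) A - lsum (ent_term b (emp l)) A <= (1 / ln b) * (1 / m + ln (1 / m)) * TV f A l).
  { rewrite <- lsum_minus. eapply Rle_trans.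
    { apply lsum_le. intros x Hx. apply (Hlo_pt b (emp l) f m x); auto. }
    rewrite (lsum_ext _ (fun x => ((1 / ln b) * (1 / m + ln (1 / m))) * Rmax 0 (emp l x - f x) + ((1 / ln b) * ln m) * (emp l x - f x)))
      by (intros; ring).
    rewrite lsum_plus, !lsum_scal, lsum_minus, Hp1, Hf1. fold (TV f A l). lra. }
  unfold logb.
  assert (0 <= 1 / ln b) by (unfold Rdiv; rewrite Rmult_1_l; left; apply Rinv_0_lt_compat; lra).
  assert (0 <= (1 / ln b) * (1 / m) * TV f A l).
  { apply Rmult_le_pos; auto. apply Rmult_le_pos; auto. unfold Rdiv; rewrite Rmult_1_l; left; apply Rinv_0_lt_compat; lra. }
  replace ((ln (1 / m) / ln b + 1 / ln b / m) * TV f A l) with ((1 / ln b) * (1 / m + ln (1 / m)) * TV f A l) by (field; lra).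
  apply Rabs_le. split; lra.
Qed.

Lemma rho_bound T m : 0 <= T -> 0 < m -> 2 * T ^ 2 < m ^ 2 -> T / (2 * (m - T)) + T / m <= 2.
Proof. intros HT Hm H.
  assert (HT1 : T <= 71 / 100 * m) by nra.
  assert (0 < m - T) by nra.
  apply (Rmult_le_reg_r (2 * m * (m - T))); [nra|].
  replace ((T / (2 * (m - T)) + T / m) * (2 * m * (m - T))) with (T * m + 2 * T * (m - T)) by (field; lra).
  nra.
Qed.

Lemma D3sum b f A m l : 1 < b -> good f A -> 0 < m -> (forall x, In x A -> m <= f x) ->
  (forall y, In y l -> In y A) -> (1 <= length l)%nat -> m <= 1 ->
  2 * TV f A l ^ 2 < m ^ 2 ->
  (forall x, In x A -> 0 < emp l x) /\
  lsum (div_term b f (emp l)) A <= (1 / ln b) * (1 + 1 / m) * TV f A l.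
Proof. intros Hb Hg Hm HmA Hl Hlen Hm1 HT.
  assert (L := lnb_pos b Hb).
  assert (Hp1 := emp_sum A l (proj1 (proj2 Hg)) Hl Hlen).
  assert (Hf1 : lsum f A = 1) by apply Hg.
  assert (HTV := TV_eq f A l Hg Hl Hlen).
  assert (HT0 := TV_nonneg f A l).
  set (T := TV f A l) in *.
  assert (HTm : T < m) by nra.
  assert (Hpos : forall x, In x A -> 0 < emp l x).
  { intros x Hx. assert (H1 := TV2_ge f A l x Hx). rewrite HTV in H1. fold T in H1.
    assert (H2 := Rmax_r 0 (f x - emp l x)). specialize (HmA x Hx). lra. }
  split; auto.
  eapply Rle_trans.
  { apply lsum_le. intros x Hx. apply (D3pt b (emp l) f m T x); auto.
    - split; [apply HmA; auto|apply (f_le1 f A); auto].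
    - split; [apply Hpos; auto|apply emp_le1].
    - rewrite <- HTV. apply TV2_ge; auto.
    - apply TV_ge; auto. }
  rewrite lsum_scal.
  rewrite (lsum_ext _ (fun x => (f x - emp l x) + (T / (2 * (m - T))) * Rmax 0 (f x - emp l x) + (T / m) * Rmax 0 (emp l x - f x)))
    by (intros; ring).
  rewrite !lsum_plus, !lsum_scal, lsum_minus, Hp1, Hf1. fold (TV2 f A l). fold (TV f A l). rewrite HTV. fold T.
  assert (Hr := rho_bound T m HT0 Hm HT).
  assert (0 < 1 / ln b) by (unfold Rdiv; rewrite Rmult_1_l; apply Rinv_0_lt_compat; lra).
  rewrite Rmult_assoc. apply Rmult_le_compat_l; [lra|].
  assert (1 <= 1 / m) by (unfold Rdiv; rewrite Rmult_1_l; apply (Rmult_le_reg_l m); [lra|]; rewrite Rinv_r by lra; lra).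
  assert (T / (2 * (m - T)) * T + T / m * T <= 2 * T) by nra.
  nra.
Qed.


Lemma exp_cmp k E : 0 < E -> 2 ^ k * E <= 2 ^ (k + 1) * E.
Proof. intros. apply Rmult_le_compat_r; [lra|]. rewrite pow_add. simpl.
  assert (0 < 2 ^ k) by (apply pow_lt; lra). lra. Qed.

Lemma div_mul_cancel e K : 0 < K -> e / K * K = e.
Proof. intros. field. lra. Qed.

Lemma exp_arg_eq N e K : 0 < K -> - (2 * N * e ^ 2) / K ^ 2 = - (2 * N * (e / K) ^ 2).
Proof. intros. field. lra. Qed.

Lemma prodf_miss x L : ~ In x L -> prodf (fun y => if Nat.eq_dec y x then 0 else 1) L = 1.
Proof. induction L; intros H; [reflexivity|]. rewrite prodf_cons, IHL by (intros X; apply H; simpl; auto).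
  destruct (Nat.eq_dec a x); [subst; exfalso; apply H; simpl; auto|ring]. Qed.

Theorem theorem1
  (b : R) (f : nat -> R) (A : list nat) (m : R)
  (Hb : 1 < b)
  (Hf : is_pmf f)
  (HA : NoDup A /\ forall x, In x A <-> 0 < f x)
  (Hm : (exists x, In x A /\ f x = m) /\ (forall x, In x A -> m <= f x)) :
  let loge := 1 / ln b in
  let M := logb b (1 / m) in
  let C := 2 ^ (length A + 1) in
  (* almost surely: emp << mu, H(emp) < oo, D(emp||mu) < oo *)
  (forall n, (1 <= n)%nat ->
     prob_le f n (fun xs => ~ (abs_cont (emp xs) f /\ H_finite b (emp xs)
                              /\ D_finite b (emp xs) f)) 0) /\
  (forall n eps, (1 <= n)%nat -> 0 < eps ->
     prob_le f n (fun xs => D_gt b (emp xs) f eps)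
       (C * exp (- (2 * m ^ 2 * INR n * eps ^ 2) / loge ^ 2)) /\
     prob_le f n (fun xs => H_dev_gt b (emp xs) f eps)
       (C * exp (- (2 * INR n * eps ^ 2) / (M + loge / m) ^ 2)) /\
     prob_le f n (fun xs => D_gt b f (emp xs) eps)
       (C * (exp (- (2 * INR n * eps ^ 2) / (loge ^ 2 * (1 / m + 1) ^ 2))
             + exp (- (INR n * m ^ 2))))) /\
  (* almost surely D(mu||emp_n) < oo eventually:
     P(liminf_n {D(mu||emp_n) < oo}) = 1, expressed via finite-dimensional laws *)
  (forall delta, 0 < delta ->
     exists N, (1 <= N)%nat /\
       forall Mn, (N <= Mn)%nat ->
         prob_le f Mn (fun xs => ~ (forall k, (N <= k <= Mn)%nat ->
                                     D_finite b f (emp (firstn k xs)))) delta).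
Proof.
  intros loge M C.
  destruct Hf as [Hf0 Hf1]. destruct HA as [HnA HA]. destruct Hm as [[x0 [Hx0 Hfx0]] HmA].
  assert (Hg : good f A).
  { repeat split; auto; try apply HA.
    symmetry. apply (fin_sum_unique f A 1 HnA); auto.
    intros x Hx. destruct (Hf0 x); auto. exfalso; apply Hx, HA; auto. }
  assert (Hm0 : 0 < m) by (rewrite <- Hfx0; apply HA; auto).
  assert (Hm1 : m <= 1) by (rewrite <- Hfx0; apply (f_le1 f A); auto).
  assert (L := lnb_pos b Hb).
  assert (Hloge : 0 < loge) by (unfold loge; unfold Rdiv; rewrite Rmult_1_l; apply Rinv_0_lt_compat; lra).
  assert (HC : forall E, 0 < E -> 2 ^ length A * E <= C * E) by (intros; apply exp_cmp; auto).
  split; [|split].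
  -
    intros n Hn K. rewrite <- (trunc_false f n K). apply tp_mono with A; auto.
    intros l Hlen Hl Hneg. apply Hneg.
    destruct (emp_facts f A b l Hg Hl) as (H1 & H2 & H3).
    split; [auto|split; eexists; eauto].
  - intros n eps Hn Heps.
    assert (HnR : 0 < INR n) by (apply lt_0_INR; lia).
    split; [|split].
    +
      intros K. set (t := m * eps / loge).
      assert (Ht : 0 <= t) by (unfold t; apply Rmult_le_pos; [nra|left; apply Rinv_0_lt_compat; lra]).
      eapply Rle_trans.
      { apply tp_mono with (A := A) (E' := fun l => t <= TV f A l); auto.
        intros l Hlen Hl HD.
        destruct (emp_facts f A b l Hg Hl) as (H1 & H2 & H3).
        destruct HD as [HD|HD]; [exfalso; apply HD; eexists; eauto|].
        specialize (HD _ H3).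
        assert (H4 := D1sum b f A m l Hb Hg Hm0 HmA).
        unfold t, loge in *.
        assert (eps < 1 / ln b / m * TV f A l) by lra.
        apply (Rmult_le_reg_r (/ ln b / m)).
        { unfold Rdiv. apply Rmult_lt_0_compat; apply Rinv_0_lt_compat; lra. }
        replace (m * eps / (1 / ln b) * (/ ln b / m)) with eps by (field; lra).
        replace (TV f A l * (/ ln b / m)) with (1 / ln b / m * TV f A l) by (field; lra). lra. }
      eapply Rle_trans; [apply TV_bound; auto|].
      replace (- (2 * m ^ 2 * INR n * eps ^ 2) / loge ^ 2) with (- (2 * INR n * t ^ 2))
        by (unfold t; field; lra).
      apply HC, exp_pos.
    +
      intros K.
      assert (HM : 0 <= M).
      { unfold M, logb. unfold Rdiv. apply Rmult_le_pos; [|left; apply Rinv_0_lt_compat; lra].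
        rewrite <- ln_1. apply ln_le; [lra|]. rewrite Rmult_1_l.
        apply (Rmult_le_reg_l m); [lra|]. rewrite Rinv_r by lra. lra. }
      assert (HK : 0 < M + loge / m) by (assert (0 < loge / m) by (apply Rdiv_lt_0_compat; lra); lra).
      set (t := eps / (M + loge / m)).
      assert (Ht : 0 <= t) by (unfold t; left; apply Rdiv_lt_0_compat; lra).
      eapply Rle_trans.
      { apply tp_mono with (A := A) (E' := fun l => t <= TV f A l); auto.
        intros l Hlen Hl HD.
        destruct (emp_facts f A b l Hg Hl) as (H1 & H2 & H3).
        specialize (HD _ _ H2 (H_is_f f A b Hg)).
        assert (H4 := Hsum b f A m l Hb Hg Hm0 HmA Hl ltac:(lia)).
        fold M in H4. fold loge in H4.
        unfold t. apply (Rmult_le_reg_r (M + loge / m)); auto.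
        rewrite div_mul_cancel by exact HK. lra. }
      eapply Rle_trans; [apply TV_bound; auto|].
      rewrite exp_arg_eq by exact HK. fold t.
      apply HC, exp_pos.
    +
      intros K.
      assert (HK : 0 < loge * (1 / m + 1)) by (apply Rmult_lt_0_compat; [lra|]; assert (0 < 1 / m) by (apply Rdiv_lt_0_compat; lra); lra).
      set (t := eps / (loge * (1 / m + 1))).
      assert (Ht : 0 <= t) by (unfold t; left; apply Rdiv_lt_0_compat; lra).
      set (s1 := m * / sqrt 2).
      assert (Hs2 : sqrt 2 * sqrt 2 = 2) by (apply sqrt_sqrt; lra).
      assert (Hsq : 0 < sqrt 2) by (apply sqrt_lt_R0; lra).
      assert (Hs1 : 0 <= s1) by (unfold s1; left; apply Rmult_lt_0_compat; [lra|apply Rinv_0_lt_compat; lra]).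
      assert (Hs1sq : 2 * s1 ^ 2 = m ^ 2).
      { unfold s1. replace ((m * / sqrt 2) ^ 2) with (m ^ 2 / (sqrt 2 * sqrt 2)) by (field; lra).
        rewrite Hs2. field. }
      eapply Rle_trans.
      { apply tp_or with (A := A) (E1 := fun l => t <= TV f A l) (E2 := fun l => s1 <= TV f A l); auto.
        intros l Hlen Hl HD.
        destruct (Rle_dec s1 (TV f A l)) as [Hb1|Hb1]; [right; auto|left].
        assert (HT0 := TV_nonneg f A l).
        assert (HT2 : 2 * TV f A l ^ 2 < m ^ 2) by nra.
        destruct (D3sum b f A m l Hb Hg Hm0 HmA Hl ltac:(lia) Hm1 HT2) as [Hpos Hle].
        destruct HD as [HD|HD]; [exfalso; apply HD; apply D_finite_fin with A; auto|].
        assert (HDi : D_is b f (emp l) (lsum (div_term b f (emp l)) A)).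
        { destruct (D_finite_fin b f A (emp l) Hg Hpos) as [d Hd].
          destruct Hd as [Hac Hd]. split; auto. apply fin_sum; [apply Hg|].
          intros x Hx. unfold div_term. rewrite (f_off f A x Hg Hx). destruct (Rlt_dec 0 0); [lra|reflexivity]. }
        specialize (HD _ HDi).
        fold loge in Hle.
        unfold t. apply (Rmult_le_reg_r (loge * (1 / m + 1))); auto.
        rewrite div_mul_cancel by exact HK.
        replace (TV f A l * (loge * (1 / m + 1))) with (loge * (1 + 1 / m) * TV f A l) by ring. lra. }
      assert (B1 := TV_bound f A n K t Hg Ht Hn).
      assert (B2 := TV_bound f A n K s1 Hg Hs1 Hn).
      rewrite <- Rpow_mult_distr, exp_arg_eq by exact HK. fold t.
      replace (- (INR n * m ^ 2)) with (- (2 * INR n * s1 ^ 2)) by (rewrite <- Hs1sq; ring).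
      rewrite Rmult_plus_distr_l.
      assert (X1 := HC _ (exp_pos (- (2 * INR n * t ^ 2)))).
      assert (X2 := HC _ (exp_pos (- (2 * INR n * s1 ^ 2)))).
      lra.
  - intros delta Hd.
    set (k := length A).
    assert (Hk : 0 < INR k) by (apply lt_0_INR; unfold k; destruct A; [destruct Hx0|simpl; lia]).
    destruct (pow_lt_1_zero (1 - m) ltac:(rewrite Rabs_right; lra) (delta / INR k) ltac:(apply Rdiv_lt_0_compat; lra)) as [N0 HN0].
    set (h := fun x y => if Nat.eq_dec y x then 0 else 1).
    assert (Hh : forall x y, 0 <= h x y) by (intros; unfold h; destruct (Nat.eq_dec y x); lra).
    exists (S N0). split; [lia|]. intros Mn HMn K.
    eapply Rle_trans.
    { apply tp_bound with (A := A) (G := fun l => lsum (fun x => prodf (h x) (firstn (S N0) l)) A); auto.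
      - intros l. apply lsum_nonneg. intros; apply prodf_nonneg; auto.
      - intros l Hlen Hl HE.
        destruct (classic (forall x, In x A -> In x (firstn (S N0) l))) as [Hall|Hnot].
        + exfalso; apply HE. intros j Hj. apply D_finite_fin with A; auto.
          intros x Hx. apply emp_pos. apply In_firstn_le with (S N0); [lia|auto].
        + apply not_all_ex_not in Hnot. destruct Hnot as [x Hx].
          assert (In x A /\ ~ In x (firstn (S N0) l)) as [Hx1 Hx2] by tauto.
          rewrite <- (prodf_miss x (firstn (S N0) l) Hx2).
          apply (lsum_single_le (fun x => prodf (h x) (firstn (S N0) l))); auto.
          intros; apply prodf_nonneg; auto. }
    rewrite (lsum_ext _ (fun l => lsum (fun x => prodf f l * prodf (h x) (firstn (S N0) l)) A))
      by (intros; rewrite lsum_scal; reflexivity).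
    rewrite lsum_exchange.
    eapply Rle_trans.
    { apply lsum_le. intros x Hx. apply (prod_bound f A (h x) K Mn (S N0) Hg (Hh x) HMn). }
    eapply Rle_trans.
    { apply (lsum_le _ (fun _ => (1 - m) ^ S N0)). intros x Hx. apply pow_incr. split.
      - apply lsum_nonneg. intros; apply Rmult_le_pos; auto.
      - replace (lsum (fun a => f a * h x a) A) with (1 - f x).
        + specialize (HmA x Hx). lra.
        + transitivity (lsum f A - lsum (fun a => f a * (if Nat.eq_dec x a then 1 else 0)) A).
          * rewrite lsum_delta by auto. rewrite (proj2 (proj2 (proj2 Hg))). reflexivity.
          * rewrite <- lsum_minus. apply lsum_ext. intros a _. unfold h.
            destruct (Nat.eq_dec a x), (Nat.eq_dec x a); subst; try congruence; ring. }
    rewrite lsum_const. fold k.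
    specialize (HN0 (S N0) ltac:(lia)). rewrite Rabs_right in HN0 by (apply Rle_ge, pow_le; lra).
    apply (Rmult_lt_compat_l (INR k)) in HN0; auto.
    replace (INR k * (delta / INR k)) with delta in HN0 by (field; lra). lra.
Qed.
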